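(* Let $M$ be a three-dimensional warped product space with Euclidean coordinates $(z^1,z^2,z^3)$ on the underlying $\mathbb{R}^3$, and let $\vec r$ be a surface in $M$ (with position vector $\vec r$). For $\alpha=1,2,3$ let $E_\alpha=\frac{\partial}{\partial z^\alpha}\times_E\vec r$, where $\times_E$ is the Euclidean cross product. Then each $E_\alpha$ satisfies $$\vec r_i\cdot D_jE_\alpha+\vec r_j\cdot D_iE_\alpha=0\quad\text{for all }i,j,$$ and moreover $E_\alpha=\frac{\partial}{\partial z^\alpha}\times X$, where $X=rf(r)\frac{\partial}{\partial r}$ and $\times$ is the cross product induced by the warped metric (with the same orientation).
   Context: A three-dimensional warped product space is (a region of) $\mathbb{R}^3$ with polar coordinates $(r,\theta)$ and metric $ds^2=\frac{1}{f(r)^2}dr^2+r^2dS_2^2$ ($dS_2^2$ round metric, $f$ smooth and positive); $\cdot$ is this metric, $D$ its Levi-Civita connection, $\vec r_i=\partial \vec r/\partial x^i$ in local coordinates on the surface. The cross product $\times$ induced by $\cdot$ is the unique bilinear map with $a\times b\perp a,b$, $|a\times b|^2=|a|^2|b|^2-(a\cdot b)^2$, and $(a,b,a\times b)$ positively oriented for independent $a,b$. *)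

(* Defs.v *)
From HB Require Import structures.
From mathcomp Require Import all_boot all_order all_algebra.
From mathcomp Require Import all_classical all_reals all_analysis.
Set Implicit Arguments. Unset Strict Implicit. Unset Printing Implicit Defensive.
Import Order.TTheory GRing.Theory Num.Theory.
Import numFieldNormedType.Exports.
Local Open Scope ring_scope.

Section WarpedDefs.
Variable R : realType.

Definition e3 (a : 'I_3) : 'rV[R]_3 := delta_mx 0 a.
Definition e2 (i : 'I_2) : 'rV[R]_2 := delta_mx 0 i.

Definition cmp (a : 'rV[R]_3) (k : nat) : R := a 0 (inord k).

Definition enorm (z : 'rV[R]_3) : R := Num.sqrt (\sum_k z 0 k ^+ 2).

Definition crossE (a b : 'rV[R]_3) : 'rV[R]_3 :=
  \row_(k < 3)
    (if (k == 0 :> nat) then cmp a 1 * cmp b 2 - cmp a 2 * cmp b 1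
     else if (k == 1 :> nat) then cmp a 2 * cmp b 0 - cmp a 0 * cmp b 2
     else cmp a 0 * cmp b 1 - cmp a 1 * cmp b 0).

(* The warped metric ds^2 = dr^2/f(r)^2 + r^2 dS_2^2 written in the Euclidean
   coordinates z of R^3: since dz.dz = dr^2 + r^2 dS_2^2 and dr = (z.dz)/r,
   g_z(u,v) = u.v + (1/f(r)^2 - 1) (z.u)(z.v)/r^2,  r = |z|. *)
Definition gmat (f : R -> R) (z : 'rV[R]_3) : 'M[R]_3 :=
  1%:M + (((f (enorm z))^-2 - 1) / (enorm z) ^+ 2) *: (z^T *m z).

Definition gdot (G : 'M[R]_3) (u v : 'rV[R]_3) : R := (u *m G *m v^T) 0 0.

Definition dgmat (f : R -> R) (z : 'rV[R]_3) (c l b : 'I_3) : R :=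
  'D_(e3 c) (fun y => gmat f y l b) z.

Definition christoffel (f : R -> R) (z : 'rV[R]_3) (k a b : 'I_3) : R :=
  2^-1 * \sum_(l < 3) (invmx (gmat f z)) k l *
     (dgmat f z a l b + dgmat f z b l a - dgmat f z l a b).

Definition rpart (r : 'rV[R]_2 -> 'rV[R]_3) (j : 'I_2) (p : 'rV[R]_2) : 'rV[R]_3 :=
  'D_(e2 j) r p.

Definition covD (f : R -> R) (r : 'rV[R]_2 -> 'rV[R]_3)
    (E : 'rV[R]_3 -> 'rV[R]_3) (j : 'I_2) (p : 'rV[R]_2) : 'rV[R]_3 :=
  \row_(k < 3) ('D_(e2 j) (fun q => E (r q) 0 k) p +
      \sum_(a < 3) \sum_(b < 3)
         christoffel f (r p) k a b * (rpart r j p) 0 a * E (r p) 0 b).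

Definition Efield (al : 'I_3) (z : 'rV[R]_3) : 'rV[R]_3 := crossE (e3 al) z.

(* X = r f(r) d/dr, where d/dr = z/|z| in Euclidean coordinates *)
Definition Xfield (f : R -> R) (z : 'rV[R]_3) : 'rV[R]_3 :=
  (enorm z * f (enorm z)) *: ((enorm z)^-1 *: z).

Definition mat3 (a b c : 'rV[R]_3) : 'M[R]_3 :=
  \matrix_(k < 3) (if (k == 0 :> nat) then a else if (k == 1 :> nat) then b else c).

(* c is "the cross product induced by the metric G" (at one point):
   the bilinear map with  a x b _|_ a, b ;  |a x b|^2 = |a|^2|b|^2 - (a.b)^2 ;
   (a, b, a x b) positively oriented (w.r.t. the standard orientation of R^3,
   the one of the Euclidean cross product) for independent a, b. *)
Definition is_cross (G : 'M[R]_3) (c : 'rV[R]_3 -> 'rV[R]_3 -> 'rV[R]_3) : Prop :=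
  [/\ (forall (k : R) a a' b, c (k *: a + a') b = k *: c a b + c a' b),
      (forall (k : R) a b b', c a (k *: b + b') = k *: c a b + c a b'),
      (forall a b, gdot G (c a b) a = 0 /\ gdot G (c a b) b = 0),
      (forall a b, gdot G (c a b) (c a b) =
                   gdot G a a * gdot G b b - (gdot G a b) ^+ 2) &
      (forall a b, (forall s t : R, s *: a + t *: b = 0 -> s = 0 /\ t = 0) ->
                   0 < \det (mat3 a b (c a b)))].

End WarpedDefs.

(* Main.v *)
Require Import Defs.
From HB Require Import structures.
From mathcomp Require Import all_boot all_order all_algebra.
From mathcomp Require Import all_classical all_reals all_analysis.
From mathcomp Require Import ring lra.
Import Order.TTheory GRing.Theory Num.Theory.
Import numFieldNormedType.Exports.
Local Open Scope ring_scope.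

Section S.
Variable R : realType.

Notation i0 := (@inord 2 0).
Notation i1 := (@inord 2 1).
Notation i2 := (@inord 2 2).

Lemma sum3 (F : 'I_3 -> R) : \sum_(i < 3) F i = F i0 + F i1 + F i2.
Proof.
rewrite !big_ord_recl big_ord0 addr0 addrA.
by congr (F _ + F _ + F _); apply/val_inj; rewrite /= inordK.
Qed.

Lemma ieq (i j : nat) : (i < 3)%N -> (j < 3)%N -> ((@inord 2 i) == inord j) = (i == j).
Proof.
move=> hi hj; apply/eqP/eqP => [h|->] //.
by have := congr1 val h; rewrite /= !inordK.
Qed.

Lemma det3 (M : 'M[R]_3) : \det M =
  M i0 i0 * (M i1 i1 * M i2 i2 - M i1 i2 * M i2 i1)
  - M i0 i1 * (M i1 i0 * M i2 i2 - M i1 i2 * M i2 i0)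
  + M i0 i2 * (M i1 i0 * M i2 i1 - M i1 i1 * M i2 i0).
Proof.
rewrite (expand_det_row _ ord0) !big_ord_recl big_ord0 /cofactor.
rewrite !(expand_det_row _ ord0) !big_ord_recl !big_ord0 /cofactor.
rewrite !det_mx11 !mxE /=.
pose g (i j : nat) := M (inord i) (inord j).
have hM : forall x y : 'I_3, M x y = g x y by move=> x y; rewrite /g !inord_val.
rewrite !hM /= !inordK // /bump /=.
ring.
Qed.

Lemma row3 (u v : 'rV[R]_3) : u 0 i0 = v 0 i0 -> u 0 i1 = v 0 i1 -> u 0 i2 = v 0 i2 -> u = v.
Proof.
move=> h0 h1 h2; apply/rowP => k; rewrite -(inord_val k).
case: k => -[|[|[|n]]] hk //=.
Qed.

Definition dot3 (u v : 'rV[R]_3) := u 0 i0 * v 0 i0 + u 0 i1 * v 0 i1 + u 0 i2 * v 0 i2.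

Definition phi (f : R -> R) (y : 'rV[R]_3) := ((f (enorm y))^-2 - 1) / (enorm y)^+2.

Lemma gent (f : R -> R) (y : 'rV[R]_3) (m b : 'I_3) : gmat f y m b = (m == b)%:R + phi f y * (y 0 m * y 0 b).
Proof.
rewrite /gmat !mxE big_ord1 !mxE /phi; congr (_ + _).
Qed.

Lemma gdotE (f : R -> R) (z x y : 'rV[R]_3) : gdot (gmat f z) x y = dot3 x y + phi f z * dot3 x z * dot3 y z.
Proof.
rewrite /gdot !mxE sum3 !mxE !sum3 !gent !ieq //= /dot3; ring.
Qed.

Lemma sqz (z : 'rV[R]_3) : dot3 z z = enorm z ^+ 2.
Proof.
rewrite /enorm sqr_sqrtr; last by apply: sumr_ge0 => i _; exact: sqr_ge0.
by rewrite sum3 /dot3 !expr2.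
Qed.

Lemma cE0 (a b : 'rV[R]_3) : crossE a b 0 i0 = a 0 i1 * b 0 i2 - a 0 i2 * b 0 i1.
Proof. by rewrite /crossE mxE inordK. Qed.
Lemma cE1 (a b : 'rV[R]_3) : crossE a b 0 i1 = a 0 i2 * b 0 i0 - a 0 i0 * b 0 i2.
Proof. by rewrite /crossE mxE inordK. Qed.
Lemma cE2 (a b : 'rV[R]_3) : crossE a b 0 i2 = a 0 i0 * b 0 i1 - a 0 i1 * b 0 i0.
Proof. by rewrite /crossE mxE inordK. Qed.


Lemma part2 (f : R -> R) (al : 'I_3) (z : 'rV[R]_3) (c : 'rV[R]_3 -> 'rV[R]_3 -> 'rV[R]_3) :
  0 < enorm z -> 0 < f (enorm z) -> is_cross (gmat f z) c ->
  @Efield R al z = c (@e3 R al) (Xfield f z).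
Proof.
move=> s0 F0 [cl cr corth cnorm cor].
set a := @e3 R al; set F := f (enorm z); set s := enorm z.
have sn0 : s != 0 by rewrite gt_eqF.
have Fn0 : F != 0 by rewrite gt_eqF.
have hX : Xfield f z = F *: z.
  by rewrite /Xfield scalerA -/s -/F; congr (_ *: _); field.
have c0 : forall x, c x 0 = 0.
  move=> x; have := cr 1 x 0 0; rewrite !scale1r addr0.
  by move=> /(congr1 (fun t => t - c x 0)); rewrite subrr addrK => <-.
rewrite hX.
have -> : c a (F *: z) = F *: c a z.
  by have := cr F a z 0; rewrite !addr0 c0 addr0.
set v := c a z.
have [hva0 hvz0] := corth a z; rewrite -/v in hva0 hvz0.
have hn := cnorm a z; rewrite -/v in hn.
rewrite !gdotE in hva0 hvz0 hn.
have hs : dot3 z z = s ^+ 2 by rewrite sqz.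
have hphi : phi f z = (F^-2 - 1) / s ^+ 2 by [].
rewrite hs in hvz0 hn.
have hvz : dot3 v z = 0.
  have : dot3 v z * F^-2 = 0 by rewrite -hvz0 hphi; field; rewrite ?sn0 ?Fn0.
  move=> h; have -> : dot3 v z = (dot3 v z * F^-2) * F^+2 by field; rewrite ?sn0 ?Fn0.
  by rewrite h mul0r.
rewrite hvz !(mulr0, mul0r, addr0) in hva0.
rewrite hvz !(mulr0, mul0r, addr0) in hn.
set w := crossE a z.
change (w = F *: v).
have hW : dot3 w w = dot3 a a * s ^+ 2 - dot3 a z ^+ 2.
  by rewrite -hs /dot3 /w !cE0 !cE1 !cE2; ring.
have hvv : dot3 v v = F^-2 * dot3 w w.
  by rewrite hn hW hphi; field; rewrite ?sn0 ?Fn0.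
have hw0 : w 0 i0 = w 0 i0 by [].
have [W0|Wn0] := eqVneq (dot3 w w) 0.
  have [w0 w1 w2] : [/\ w 0 i0 = 0, w 0 i1 = 0 & w 0 i2 = 0].
    move: W0; rewrite /dot3 => W0; split; nra.
  have [v0 v1 v2] : [/\ v 0 i0 = 0, v 0 i1 = 0 & v 0 i2 = 0].
    move: hvv; rewrite W0 mulr0 /dot3 => W1; split; nra.
  by apply: row3; rewrite [RHS]mxE ?w0 ?w1 ?w2 ?v0 ?v1 ?v2 mulr0.
have Wp : 0 < dot3 w w.
  rewrite lt0r Wn0 /= /dot3; apply: addr_ge0; [apply: addr_ge0|]; rewrite -expr2; exact: sqr_ge0.
set W := dot3 w w in Wn0 Wp hvv.
set lam := dot3 v w / W.
have key : forall k : 'I_3, W * v 0 k = dot3 v w * w 0 k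
   + (dot3 v a * dot3 z z - dot3 v z * dot3 a z) * a 0 k
   + (dot3 v z * dot3 a a - dot3 v a * dot3 a z) * z 0 k.
  move=> k; rewrite -(inord_val k); case: k => -[|[|[|n]]] hk //=;
  by rewrite /W /dot3 /w !cE0 !cE1 !cE2; ring.
have hv : forall k : 'I_3, v 0 k = lam * w 0 k.
  move=> k; have := key k; rewrite hva0 hvz !(mulr0, mul0r, subr0, addr0, sub0r, oppr0, mulrN) => hk.
  have -> : v 0 k = (W * v 0 k) / W by field; rewrite ?Wn0.
  by rewrite hk /lam; field; rewrite ?Wn0.
have hvv2 : dot3 v v = lam ^+ 2 * W by rewrite /dot3 !hv /W /dot3; ring.
have hl2 : lam ^+ 2 = F^-2.
  have : (lam ^+ 2 - F^-2) * W = 0 by rewrite mulrBl -hvv2 -hvv subrr.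
  by move/eqP; rewrite mulf_eq0 (negPf Wn0) orbF subr_eq0 => /eqP.
have indep : forall s' t : R, s' *: a + t *: z = 0 -> s' = 0 /\ t = 0.
  move=> s' t h.
  have hu : forall k, s' * a 0 k + t * z 0 k = 0.
    by move=> k; have := congr1 (fun M : 'rV[R]_3 => M 0 k) h; rewrite !mxE.
  pose U k := s' * a 0 k + t * z 0 k.
  have ht : t * W = 0.
    have -> : t * W = w 0 i0 * (a 0 i1 * U i2 - a 0 i2 * U i1)
      + w 0 i1 * (a 0 i2 * U i0 - a 0 i0 * U i2)
      + w 0 i2 * (a 0 i0 * U i1 - a 0 i1 * U i0).
      by rewrite /U /W /dot3 /w !cE0 !cE1 !cE2; ring.
    by rewrite /U !hu; ring.
  have hs' : s' * W = 0.
    have -> : s' * W = w 0 i0 * (U i1 * z 0 i2 - U i2 * z 0 i1)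
      + w 0 i1 * (U i2 * z 0 i0 - U i0 * z 0 i2)
      + w 0 i2 * (U i0 * z 0 i1 - U i1 * z 0 i0).
      by rewrite /U /W /dot3 /w !cE0 !cE1 !cE2; ring.
    by rewrite /U !hu; ring.
  by split; [move/eqP: hs'|move/eqP: ht]; rewrite mulf_eq0 (negPf Wn0) orbF => /eqP.
have hdet := cor a z indep; rewrite -/v in hdet.
have hdet2 : \det (mat3 a z v) = lam * W.
  rewrite det3 /mat3 !mxE !inordK //= /W /dot3 !hv /w !cE0 !cE1 !cE2; ring.
rewrite hdet2 in hdet.
have lp : 0 < lam by rewrite -(pmulr_lgt0 _ Wp).
have Fi : 0 < F^-1 by rewrite invr_gt0.
have hl : lam = F^-1.
  have : (lam - F^-1) * (lam + F^-1) = 0.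
    by rewrite -subr_sqr hl2 exprVn subrr.
  move/eqP; rewrite mulf_eq0 => /orP[]; first by rewrite subr_eq0 => /eqP.
  by move=> /eqP h; move: (addr_gt0 lp Fi); rewrite h ltxx.
by apply: row3; rewrite [RHS]mxE hv hl mulrA mulfV // mul1r.
Qed.

Lemma scE (x y : R) : x *: y = x * y. Proof. by []. Qed.

Lemma mulfE (F G : 'rV[R]_3 -> R) (y : 'rV[R]_3) : (F * G) y = F y * G y.
Proof. by []. Qed.

Definition crd (m : 'I_3) : 'rV[R]_3 -> R := fun y => y 0 m.
Definition sqf : 'rV[R]_3 -> R := crd i0 * crd i0 + crd i1 * crd i1 + crd i2 * crd i2.

Lemma enormE : @enorm R = Num.sqrt \o sqf.
Proof. by apply/funext => y; rewrite /enorm sum3 /= !expr2. Qed.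

Lemma diff_crd m (z : 'rV[R]_3) : differentiable (crd m) z.
Proof. exact: differentiable_coord. Qed.

Lemma Dcrd m (z v : 'rV[R]_3) : 'D_v (crd m) z = v 0 m.
Proof.
have h := @derive_mx R _ 1 3 id z v (@derivable_id R _ z v).
rewrite derive_id in h.
by rewrite {2}h mxE.
Qed.

Lemma diff_sqf (z : 'rV[R]_3) : differentiable sqf z.
Proof.
by apply: differentiableD; [apply: differentiableD|]; apply: differentiableM; exact: diff_crd.
Qed.

Lemma Dsqf (z v : 'rV[R]_3) : 'D_v sqf z = 2 * dot3 z v.
Proof.
have dc : forall m, derivable (crd m) z v by move=> m; apply: diff_derivable; exact: diff_crd.
rewrite /sqf !deriveD ?deriveM ?Dcrd //.
- rewrite !scE /dot3 /crd /=; ring.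
- exact: derivableM.
- exact: derivableM.
- by apply: derivableD; apply: derivableM.
- exact: derivableM.
Qed.

Lemma sqf_pos (z : 'rV[R]_3) : 0 < enorm z -> 0 < sqf z.
Proof. by rewrite enormE /= sqrtr_gt0. Qed.

Lemma diff_sqrt (x : R) : 0 < x -> differentiable (@Num.sqrt R) x.
Proof. by move=> hx; apply/derivable1_diffP; have [] := @is_derive1_sqrt R x hx. Qed.

Lemma diff_enorm (z : 'rV[R]_3) : 0 < enorm z -> differentiable (@enorm R) z.
Proof.
move=> hz; rewrite enormE; apply: differentiable_comp; first exact: diff_sqf.
exact/diff_sqrt/sqf_pos.
Qed.

Lemma denorm0 (z v : 'rV[R]_3) : 0 < enorm z -> dot3 z v = 0 -> 'd (@enorm R) z v = 0.
Proof.
move=> hz hv; rewrite enormE diff_comp; last 2 first.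
- exact: diff_sqf.
- exact/diff_sqrt/sqf_pos.
by rewrite /= -(deriveE v (diff_sqf z)) Dsqf hv mulr0 linear0.
Qed.

Definition h1 (f : R -> R) (s : R) := ((f s)^-2 - 1) / s ^+ 2.

Lemma phiE (f : R -> R) : phi f = h1 f \o @enorm R.
Proof. by []. Qed.

Lemma diff_h1 (f : R -> R) (s0 : R) : 0 < s0 -> f s0 != 0 -> derivable f s0 1 -> differentiable (h1 f) s0.
Proof.
move=> s0p fn0 df; have df' : differentiable f s0 by apply/derivable1_diffP.
have d1 : differentiable (fun s => (f s * f s)^-1) s0.
  by apply: differentiableV; [exact: differentiableM|exact: mulf_neq0].
have d2 : differentiable ((fun s => (f s * f s)^-1) - cst 1) s0.
  by apply: differentiableB => //; exact: differentiable_cst.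
have d3 : differentiable (fun s : R => (s * s)^-1) s0.
  apply: differentiableV; last by rewrite mulf_neq0 // gt_eqF.
  exact: (@differentiableM _ _ id id).
have := differentiableM d2 d3.
suff -> : h1 f = ((fun s => (f s * f s)^-1) - cst 1) * (fun s : R => (s * s)^-1) by [].
by apply/funext => s; rewrite /h1 /= !expr2.
Qed.

Lemma diff_phi (f : R -> R) (z : 'rV[R]_3) : 0 < enorm z -> f (enorm z) != 0 ->
  derivable f (enorm z) 1 -> differentiable (phi f) z.
Proof.
move=> hz fn0 df; rewrite phiE; apply: differentiable_comp.
  exact: diff_enorm.
exact: diff_h1.
Qed.

Lemma dphi0 (f : R -> R) (z v : 'rV[R]_3) : 0 < enorm z -> f (enorm z) != 0 ->
  derivable f (enorm z) 1 -> dot3 z v = 0 -> 'D_v (phi f) z = 0.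
Proof.
move=> hz fn0 df hv; rewrite deriveE; last exact: diff_phi.
rewrite phiE diff_comp /=; last 2 first.
- exact: diff_enorm.
- exact: diff_h1.
by rewrite denorm0 // linear0.
Qed.


Lemma gfun (f : R -> R) (l b : 'I_3) :
  (fun y => gmat f y l b) = cst ((l == b)%:R) + phi f * (crd l * crd b).
Proof. by apply/funext => y; rewrite gent. Qed.

Lemma Dgent (f : R -> R) (z v : 'rV[R]_3) (l b : 'I_3) : differentiable (phi f) z ->
  'D_v (fun y => gmat f y l b) z =
  'D_v (phi f) z * (z 0 l * z 0 b) + phi f z * (v 0 l * z 0 b + z 0 l * v 0 b).
Proof.
move=> hp.
have dc : forall m, derivable (crd m) z v by move=> m; apply: diff_derivable; exact: diff_crd.
have dp : derivable (phi f) z v by exact: diff_derivable.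
have dq : derivable (crd l * crd b) z v := derivableM (dc l) (dc b).
rewrite gfun deriveD; last 2 first.
- exact: derivable_cst.
- exact: (derivableM dp dq).
rewrite derive_cst add0r (deriveM dp dq) (deriveM (dc l) (dc b)) !Dcrd !scE mulfE /crd /=; ring.
Qed.

Lemma dgmatE (f : R -> R) (z : 'rV[R]_3) (c l b : 'I_3) : differentiable (phi f) z ->
  dgmat f z c l b =
  'D_(e3 R c) (phi f) z * (z 0 l * z 0 b) + phi f z * ((e3 R c) 0 l * z 0 b + z 0 l * (e3 R c) 0 b).
Proof. exact: Dgent. Qed.

Lemma DcrossE (a : 'rV[R]_3) (r : 'rV[R]_2 -> 'rV[R]_3) (p w : 'rV[R]_2) (k : 'I_3) :
  differentiable r p ->
  'D_w (fun q => crossE a (r q) 0 k) p = crossE a ('D_w r p) 0 k.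
Proof.
move=> hr; have dr : derivable r p w by exact: diff_derivable.
pose rc (c : 'I_3) := fun q => r q 0 c.
have dc : forall c, derivable (rc c) p w by move=> c; exact: ((derivable_mxP r p w).1 dr 0 c).
have Dc : forall c, 'D_w (rc c) p = ('D_w r p) 0 c by move=> c; rewrite (derive_mx dr) mxE.
have gen : forall (c1 c2 : 'I_3) (x y : R),
    'D_w (x *: rc c1 - y *: rc c2) p = x * ('D_w r p) 0 c1 - y * ('D_w r p) 0 c2.
  move=> c1 c2 x y; rewrite deriveB; last 2 first.
  - exact: derivableZ.
  - exact: derivableZ.
  by rewrite !deriveZ // !Dc.
rewrite -(inord_val k); case: k => -[|[|[|n]]] hk //=.
- have -> : (fun q => crossE a (r q) 0 i0) = a 0 i1 *: rc i2 - a 0 i2 *: rc i1.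
    by apply/funext => q; rewrite cE0.
  by rewrite gen cE0.
- have -> : (fun q => crossE a (r q) 0 i1) = a 0 i2 *: rc i0 - a 0 i0 *: rc i2.
    by apply/funext => q; rewrite cE1.
  by rewrite gen cE1.
- have -> : (fun q => crossE a (r q) 0 i2) = a 0 i0 *: rc i1 - a 0 i1 *: rc i0.
    by apply/funext => q; rewrite cE2.
  by rewrite gen cE2.
Qed.

Lemma Gunit (f : R -> R) (z : 'rV[R]_3) : 0 < enorm z -> f (enorm z) != 0 ->
  gmat f z *m invmx (gmat f z) = 1%:M.
Proof.
move=> hz fn0.
set s := enorm z; set F := f s; set ph := phi f z.
have sn0 : s != 0 by rewrite gt_eqF.
have dn0 : 1 + ph * s ^+ 2 != 0.
  have -> : 1 + ph * s ^+ 2 = F^-2.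
    by rewrite /ph /phi -/s -/F; field; rewrite fn0 sn0.
  by rewrite invr_eq0 expf_eq0 /= (negPf fn0).
set ps := - ph / (1 + ph * s ^+ 2).
set P := z^T *m z.
have zz : z *m z^T = (s ^+ 2)%:M.
  apply/matrixP => i j; rewrite !ord1 !mxE sum3 !mxE -sqz /dot3 /=.
  by rewrite mulr1n.
have PP : P *m P = (s ^+ 2) *: P.
  by rewrite /P mulmxA -(mulmxA z^T z z^T) zz mul_mx_scalar -scalemxAl.
have G1 : gmat f z *m (1%:M + ps *: P) = 1%:M.
  rewrite /gmat -/s -/F -/P.
  change ((1%:M + ph *: P) *m (1%:M + ps *: P) = 1%:M).
  rewrite mulmxDl !mulmxDr !mul1mx !mulmx1 -scalemxAl -scalemxAr PP !scalerA.
  have coef : ps + (ph + ph * ps * s ^+ 2) = 0.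
    by rewrite /ps; field.
  by rewrite -addrA -!scalerDl coef scale0r addr0.
have [hu _] := mulmx1_unit G1.
exact: mulmxV.
Qed.

Lemma regroup (g X vv EE : 'I_3 -> R) (Ga : 'I_3 -> 'I_3 -> 'I_3 -> R) :
  \sum_(k < 3) g k * (X k + \sum_(a < 3) \sum_(b < 3) Ga k a b * vv a * EE b) =
  \sum_(k < 3) g k * X k + \sum_(a < 3) \sum_(b < 3) (\sum_(k < 3) g k * Ga k a b) * vv a * EE b.
Proof. rewrite !sum3; ring. Qed.

Lemma gdotS (G : 'M[R]_3) (u w : 'rV[R]_3) :
  gdot G u w = \sum_(m < 3) u 0 m * \sum_(k < 3) G m k * w 0 k.
Proof. by rewrite /gdot !mxE !sum3 ?mxE ?sum3 ?mxE; ring. Qed.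

Lemma lowerA (G Gi : 'M[R]_3) (T : 'I_3 -> R) (m : 'I_3) : G *m Gi = 1%:M ->
  \sum_(k < 3) G m k * (2^-1 * \sum_(l < 3) Gi k l * T l) = 2^-1 * T m.
Proof.
move=> GG.
have hE : forall l, G m i0 * Gi i0 l + G m i1 * Gi i1 l + G m i2 * Gi i2 l = (m == l)%:R.
  move=> l; transitivity ((G *m Gi) m l); first by rewrite [RHS]mxE sum3.
  by rewrite GG mxE.
transitivity (2^-1 * ((G m i0 * Gi i0 i0 + G m i1 * Gi i1 i0 + G m i2 * Gi i2 i0) * T i0
  + (G m i0 * Gi i0 i1 + G m i1 * Gi i1 i1 + G m i2 * Gi i2 i1) * T i1
  + (G m i0 * Gi i0 i2 + G m i1 * Gi i1 i2 + G m i2 * Gi i2 i2) * T i2)).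
  by rewrite !sum3; ring.
rewrite !hE; congr (_ * _); clear hE GG.
rewrite -(inord_val m); case: m => -[|[|[|n]]] hm //=; rewrite !ieq //=; ring.
Qed.

Lemma lowerG (f : R -> R) (z : 'rV[R]_3) (m a b : 'I_3) :
  gmat f z *m invmx (gmat f z) = 1%:M ->
  \sum_(k < 3) gmat f z m k * christoffel f z k a b =
  2^-1 * (dgmat f z a m b + dgmat f z b m a - dgmat f z m a b).
Proof.
move=> GG; rewrite /christoffel.
exact: (@lowerA _ _ (fun l => dgmat f z a l b + dgmat f z b l a - dgmat f z l a b) m GG).
Qed.

Lemma dlin3 (h : 'rV[R]_3 -> R) (z E : 'rV[R]_3) : differentiable h z ->
  E 0 i0 * 'D_(e3 R i0) h z + E 0 i1 * 'D_(e3 R i1) h z + E 0 i2 * 'D_(e3 R i2) h z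
  = 'D_E h z.
Proof.
move=> hd; rewrite !deriveE //.
have hE : E = E 0 i0 *: e3 R i0 + E 0 i1 *: e3 R i1 + E 0 i2 *: e3 R i2.
  by apply: row3; rewrite !mxE !ieq //= !(mulr1, mulr0, addr0, add0r).
by rewrite [in RHS]hE !linearD !linearZ /= !scE.
Qed.

End S.

Section S2.
Variable R : realType.

Notation i0 := (@inord 2 0).
Notation i1 := (@inord 2 1).
Notation i2 := (@inord 2 2).

Lemma kill_alg (G : 'M[R]_3) (D : 'I_3 -> 'I_3 -> 'I_3 -> R) (P : 'I_3 -> R) (ph : R)
  (a z u v : 'rV[R]_3) :
  (forall m k, G m k = (m == k)%:R + ph * (z 0 m * z 0 k)) ->
  (forall c l b, D c l b = P c * (z 0 l * z 0 b) + ph * ((l == c)%:R * z 0 b + z 0 l * (b == c)%:R)) ->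
  \sum_(m < 3) u 0 m * (\sum_(k < 3) G m k * crossE a v 0 k +
     \sum_(a' < 3) \sum_(b < 3) (2^-1 * (D a' m b + D b m a' - D m a' b)) * v 0 a' * crossE a z 0 b) +
  \sum_(m < 3) v 0 m * (\sum_(k < 3) G m k * crossE a u 0 k +
     \sum_(a' < 3) \sum_(b < 3) (2^-1 * (D a' m b + D b m a' - D m a' b)) * u 0 a' * crossE a z 0 b)
  = dot3 R u z * dot3 R v z * (P i0 * crossE a z 0 i0 + P i1 * crossE a z 0 i1 + P i2 * crossE a z 0 i2).
Proof.
move=> hG hD.
rewrite !sum3 !hG !hD !ieq //= !cE0 !cE1 !cE2 /dot3.
by field.
Qed.
End S2.

Section S3.
Variable R : realType.

Notation i0 := (@inord 2 0).
Notation i1 := (@inord 2 1).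
Notation i2 := (@inord 2 2).
Lemma e3E (c l : nat) : (c < 3)%N -> (l < 3)%N -> (e3 R (inord c)) 0 (inord l) = (c == l)%:R.
Proof. by move=> hc hl; rewrite /e3 mxE eqxx ieq // eq_sym. Qed.

Lemma killing (f : R -> R) (r : 'rV[R]_2 -> 'rV[R]_3) (al : 'I_3) (i j : 'I_2) (p : 'rV[R]_2) :
  differentiable r p -> 0 < enorm (r p) -> 0 < f (enorm (r p)) ->
  derivable f (enorm (r p)) 1 ->
  gdot (gmat f (r p)) (rpart r i p) (covD f r (@Efield R al) j p) +
  gdot (gmat f (r p)) (rpart r j p) (covD f r (@Efield R al) i p) = 0.
Proof.
move=> hr hz hF hdf.
have Fn0 : f (enorm (r p)) != 0 by rewrite gt_eqF.
have hp := @diff_phi R f (r p) hz Fn0 hdf.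
have GG := @Gunit R f (r p) hz Fn0.
set z := r p in hz hF Fn0 hdf hp GG *.
set a := e3 R al.
have hsum : forall (jj : 'I_2) (m : 'I_3),
  \sum_(k < 3) gmat f z m k * covD f r (@Efield R al) jj p 0 k =
  \sum_(k < 3) gmat f z m k * crossE a (rpart r jj p) 0 k +
  \sum_(a' < 3) \sum_(b < 3) (2^-1 * (dgmat f z a' m b + dgmat f z b m a' - dgmat f z m a' b))
      * rpart r jj p 0 a' * crossE a z 0 b.
  move=> jj m.
  transitivity (\sum_(k < 3) gmat f z m k * crossE a (rpart r jj p) 0 k +
    \sum_(a' < 3) \sum_(b < 3) (\sum_(k < 3) gmat f z m k * christoffel f z k a' b)
      * rpart r jj p 0 a' * crossE a z 0 b).
    rewrite -regroup; apply: eq_bigr => k _.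
    congr (_ * _); rewrite /covD mxE /Efield (@DcrossE R _ _ _ _ _ hr) //.
  congr (_ + _); apply: eq_bigr => a' _; apply: eq_bigr => b _.
  by rewrite (@lowerG R f z m a' b GG).
have gcov : forall (jj : 'I_2) (x : 'rV[R]_3),
  gdot (gmat f z) x (covD f r (@Efield R al) jj p) =
  \sum_(m < 3) x 0 m * (\sum_(k < 3) gmat f z m k * crossE a (rpart r jj p) 0 k +
  \sum_(a' < 3) \sum_(b < 3) (2^-1 * (dgmat f z a' m b + dgmat f z b m a' - dgmat f z m a' b))
      * rpart r jj p 0 a' * crossE a z 0 b).
  by move=> jj x; rewrite gdotS; apply: eq_bigr => m _; rewrite hsum.
rewrite !gcov.
set u := rpart r i p; set v := rpart r j p.
have hG : forall m k, gmat f z m k = (m == k)%:R + phi R f z * (z 0 m * z 0 k).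
  by move=> m k; rewrite gent.
have hD : forall c l b, dgmat f z c l b = (fun c => 'D_(e3 R c) (phi R f) z) c * (z 0 l * z 0 b)
    + phi R f z * ((l == c)%:R * z 0 b + z 0 l * (b == c)%:R).
  by move=> c l b; rewrite (@dgmatE R f z c l b hp) /e3 !mxE /=.
rewrite (@kill_alg R _ _ (fun c => 'D_(e3 R c) (phi R f) z) _ _ _ _ _ hG hD) /=.
set E := crossE a z.
have hEz : dot3 R z E = 0 by rewrite /dot3 /E !cE0 !cE1 !cE2; ring.
transitivity (dot3 R u z * dot3 R v z * 'D_E (phi R f) z); last first.
  by rewrite (@dphi0 R f z E hz Fn0 hdf hEz) mulr0.
congr (_ * _); rewrite -(@dlin3 R _ _ E hp).
move: ('D_(e3 R i0) (phi R f) z) ('D_(e3 R i1) (phi R f) z) ('D_(e3 R i2) (phi R f) z) => x y w.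
by rewrite /E; ring.
Qed.
End S3.

Local Open Scope classical_set_scope.

Theorem lemma8 (R : realType) (I : set R) (f : R -> R)
    (U : set 'rV[R]_2) (r : 'rV[R]_2 -> 'rV[R]_3) :
  open I -> I `<=` [set x | 0 < x] ->
  (forall x, I x -> 0 < f x) ->
  (forall (n : nat) x, I x -> derivable (f^`(n)) x 1) ->
  open U ->
  (forall p, U p -> differentiable r p /\ I (enorm (r p))) ->
  (forall (al : 'I_3) (i j : 'I_2) p, U p ->
     gdot (gmat f (r p)) (rpart r i p) (covD f r (@Efield R al) j p) +
     gdot (gmat f (r p)) (rpart r j p) (covD f r (@Efield R al) i p) = 0)
  /\
  (forall (al : 'I_3) (z : 'rV[R]_3), I (enorm z) ->
     forall c, is_cross (gmat f z) c ->
       @Efield R al z = c (@e3 R al) (Xfield f z)).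
Proof.
move=> oI Ipos fpos fder oU hU; split.
- move=> al i j p Up; have [dr hI] := hU p Up.
  have hz : 0 < enorm (r p) := Ipos _ hI.
  have hF : 0 < f (enorm (r p)) := fpos _ hI.
  have hdf : derivable f (enorm (r p)) 1.
    by have := fder 0%N _ hI; rewrite derive1n0.
  exact: (@killing R f r al i j p dr hz hF hdf).
- move=> al z hI c hc.
  exact: (@part2 R f al z c (Ipos _ hI) (fpos _ hI) hc).
Qed.
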